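(* Let $X$ be a finite simplicial complex, $d\ge 0$, and let $F^{\uparrow}:C_{d+1}(X)\to C_{d+1}(X)$ and $F^{\downarrow}:C_{d-1}(X)\to C_{d-1}(X)$ be smooth. Let $G_d(\theta)=B_d^\intercal F^{\downarrow}(B_d\theta)+B_{d+1}F^{\uparrow}(B_{d+1}^\intercal\theta)$ on $C_d(X)$. Then $G_d$ is exact if and only if the maps $P_{d+1}F^{\uparrow}P_{d+1}$ and $Q_{d-1}F^{\downarrow}Q_{d-1}$ are exact.
   Context: A finite simplicial complex $X$ on vertex set $\{1,\dots,n\}$ is a collection of nonempty subsets closed under taking nonempty subsets; $X_d$ is the set of simplices with $d+1$ vertices; a $d$-simplex with vertices $i_0<\dots<i_d$ is written $[i_0,\dots,i_d]$. $C_d(X)$ is the real vector space with basis $X_d$ and inner product making $X_d$ orthonormal ($C_{-1}(X)=0$). The boundary map is $\partial_d[i_0,\dots,i_d]=\sum_{k=0}^d(-1)^k[i_0,\dots,\widehat{i_k},\dots,i_d]$ with matrix $B_d$; $B_d^\intercal$ its transpose. $P_{d+1}$ is the orthogonal projection of $C_{d+1}(X)$ onto $\operatorname{im}(B_{d+1}^\intercal)$, and $Q_{d-1}$ is the orthogonal projection of $C_{d-1}(X)$ onto $\operatorname{im}(B_d)$. A vector field $F$ on a real inner product space $V$ is exact if $F=\nabla\phi$ for some smooth function $\phi:V\to\mathbb{R}$. *)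

(* Defs.v *)
From HB Require Import structures.
From mathcomp Require Import all_boot all_order all_algebra.
From mathcomp Require Import all_classical all_reals all_analysis.
Set Implicit Arguments. Unset Strict Implicit. Unset Printing Implicit Defensive.
Import Order.TTheory GRing.Theory Num.Theory.
Import numFieldNormedType.Exports.
Local Open Scope ring_scope.

Definition is_simplicial_complex (n : nat) (X : {set {set 'I_n}}) : Prop :=
  (forall s : {set 'I_n}, s \in X -> 0 < #|s|)%N /\
  (forall s t : {set 'I_n}, s \in X -> t \subset s -> (0 < #|t|)%N -> t \in X).

(* simplices with exactly k vertices; X_d = simplices X d.+1,
   and simplices X 0 is empty (so C_{-1}(X) = 0). *)
Definition simplices (n : nat) (X : {set {set 'I_n}}) (k : nat) : {set {set 'I_n}} :=
  [set s in X | #|s| == k].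

(* C_{k-1}(X) = R^{simplices X k}, coordinates w.r.t. the orthonormal basis
   of simplices, enumerated by enum_val. *)
Notation chain R X k := ('cV[R]_(#|simplices X k|)).

Definition boundary (R : realType) (n : nat) (X : {set {set 'I_n}}) (k : nat)
  : 'M[R]_(#|simplices X k|, #|simplices X k.+1|) :=
  \matrix_(i < #|simplices X k|, j < #|simplices X k.+1|)
    let s : {set 'I_n} := enum_val i in let t : {set 'I_n} := enum_val j in
    \sum_(v : 'I_n | (v \in t) && (s == t :\ v))
       (-1) ^+ #|[set u in t | (u < v)%N]|.

(* the orthogonal projection of x onto im(A) = { A z }, w.r.t. the standard
   inner product <u, v> = u^T v (the basis of simplices is orthonormal):
   the unique y in im(A) with x - y orthogonal to im(A). *)
Definition orth_proj (R : realType) (m k : nat) (A : 'M[R]_(m, k)) (x : 'cV[R]_m)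
  : 'cV[R]_m :=
  xget 0 [set y : 'cV[R]_m | (exists z : 'cV[R]_k, y = A *m z) /\
                             (forall z : 'cV[R]_k, (A *m z)^T *m (x - y) = 0)].

Definition iter_deriv (R : realType) (U V : normedModType R) (f : U -> V) (vs : seq U)
  : U -> V :=
  foldr (fun v g => 'D_v g) f vs.

Definition smooth (R : realType) (U V : normedModType R) (f : U -> V) : Prop :=
  forall (vs : seq U) (x : U), differentiable (iter_deriv f vs) x.

Definition grad (R : realType) (m : nat) (phi : 'cV[R]_m -> R^o) (x : 'cV[R]_m)
  : 'cV[R]_m :=
  \col_(i < m) 'D_(delta_mx i 0) phi x.

Definition exact_field (R : realType) (m : nat) (F : 'cV[R]_m -> 'cV[R]_m) : Prop :=
  exists phi : 'cV[R]_m -> R^o, smooth phi /\ forall x, F x = grad phi x.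

(* Main.v *)
Require Import Defs.
From HB Require Import structures.
From mathcomp Require Import all_boot all_order all_algebra.
From mathcomp Require Import all_classical all_reals all_analysis.
From mathcomp Require Import zify ring lra.
Import Order.TTheory GRing.Theory Num.Theory.
Import numFieldNormedType.Exports.
Local Open Scope ring_scope.

Section LinAlg.
Variable R : realType.

Lemma mxsq_eq0 p q (N : 'M[R]_(p, q)) : N *m N^T = 0 -> N = 0.
Proof.
move=> H; apply/matrixP => i j; rewrite mxE.
have := congr1 (fun M : 'M[R]_p => M i i) H; rewrite !mxE => /eqP.
under eq_bigr do rewrite mxE.
rewrite psumr_eq0 => [/allP Hall|l _]; last by rewrite -expr2 sqr_ge0.
have := Hall j (mem_index_enum _); rewrite /= mulf_eq0 orbb => /eqP //.
Qed.

Variables (m k : nat) (A : 'M[R]_(m, k)).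

Lemma rank_AtA : (A <= A^T *m A)%MS.
Proof.
have s1 : (A^T *m A <= A)%MS by apply: submxMl.
have hk : (kermx (A^T *m A) <= kermx A^T)%MS.
  rewrite sub_kermx; apply/eqP; apply: mxsq_eq0.
  have /eqP H0 : kermx (A^T *m A) *m (A^T *m A) == 0 by rewrite -sub_kermx submx_refl.
  by rewrite trmx_mul trmxK mulmxA -(mulmxA _ A^T A) H0 mul0mx.
have := mxrankS hk; rewrite !mxrank_ker mxrank_tr => hle.
have r1 : (\rank (A^T *m A) <= k)%N by apply: rank_leq_col.
have r2 : (\rank A <= k)%N by apply: rank_leq_col.
have hr : (\rank A <= \rank (A^T *m A))%N by lia.
have := mxrank_leqif_eq s1 => /leqifP.
case: ifP => [/andP[_ ->] //|_ hlt]; lia.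
Qed.

Definition Wm : 'M[R]_(k, m) := (A *m pinvmx (A^T *m A))^T.
Definition Pm : 'M[R]_m := A *m Wm.

Lemma AtAW : A^T *m A *m Wm = A^T.
Proof.
have := mulmxKpV rank_AtA => /(congr1 trmx).
by rewrite trmx_mul [(A^T *m A)^T]trmx_mul trmxK /Wm.
Qed.

Lemma AtP : A^T *m Pm = A^T.
Proof. by rewrite /Pm mulmxA AtAW. Qed.

Lemma Pm_sym : Pm^T = Pm.
Proof.
have h : Pm^T *m Pm = Pm^T.
  by rewrite {1}/Pm trmx_mul -mulmxA AtP -trmx_mul.
have := congr1 trmx h; rewrite trmx_mul trmxK => h2.
by rewrite -[LHS]h h2.
Qed.

Lemma PA : Pm *m A = A.
Proof. by rewrite -Pm_sym -[A](trmxK A) -trmx_mul AtP trmxK. Qed.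

Lemma AtPt : A^T *m Pm = A^T. Proof. exact: AtP. Qed.

Lemma orth_aux (x : 'cV[R]_m) (z : 'cV[R]_k) : (A *m z)^T *m (x - Pm *m x) = 0.
Proof. by rewrite trmx_mul -mulmxA mulmxBr mulmxA AtP subrr mulmx0. Qed.

Lemma orth_projE x : orth_proj A x = Pm *m x.
Proof.
rewrite /orth_proj; apply: xget_unique.
  rewrite /=; split; first by exists (Wm *m x); rewrite /Pm mulmxA.
  by move=> z; apply: orth_aux.
move=> y /= [[z0 ->] Hz].
set w := z0 - Wm *m x.
have e : A *m z0 - Pm *m x = A *m w by rewrite /w mulmxBr /Pm mulmxA.
have : (A *m w)^T *m (A *m w) = 0.
  have := orth_aux x w; have := Hz w.
  rewrite -e => h1 h2.
  have E : A *m z0 - Pm *m x = (x - Pm *m x) - (x - A *m z0).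
    by rewrite opprB [LHS]addrC [RHS]addrC addrA subrK addrC.
  by rewrite {2}E mulmxBr h1 h2 subrr.
move=> h; apply/eqP; rewrite -subr_eq0 e.
have := @mxsq_eq0 _ _ ((A *m w)^T); rewrite trmxK => /(_ h) /(congr1 trmx).
by rewrite trmxK trmx0 => ->.
Qed.
End LinAlg.

Section DD.
Variables (R : realType) (n : nat).

Definition sgn (T : {set 'I_n}) (v : 'I_n) : R := (-1) ^+ #|[set u in T | (u < v)%N]|.

Lemma sgnD1 (T : {set 'I_n}) v w : v \in T -> w != v ->
  sgn (T :\ v) w = (-1) ^+ (v < w)%N * sgn T w.
Proof.
move=> vT wv; rewrite /sgn.
rewrite [in RHS](cardsD1 v) !inE vT /=.
have -> : [set u in T | (u < w)%N] :\ v = [set u in T :\ v | (u < w)%N].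
  by apply/setP => u; rewrite !inE andbA.
by rewrite exprD mulrA -exprD addnn -[X in _ = X * _]signr_odd odd_double expr0 mul1r.
Qed.

Lemma sum_swap_zero (T : {set 'I_n}) (r : {set 'I_n}) :
  \sum_(v in T) \sum_(w | (w \in T :\ v) && (r == T :\ v :\ w))
     (-1) ^+ (v < w)%N * sgn T w * sgn T v = 0 :> R.
Proof.
set S := LHS.
have hS : S = \sum_v \sum_w (if [&& v \in T, w \in T, w != v & r == T :\ v :\ w]
           then (-1) ^+ (v < w)%N * sgn T w * sgn T v else 0).
  rewrite /S big_mkcond; apply: eq_bigr => v _.
  case: (boolP (v \in T)) => vT /=; last by rewrite big1.
  rewrite big_mkcond; apply: eq_bigr => w _; rewrite !inE /=.
  by case: (w \in T); case: (w != v).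
have hS2 : S = - S.
  rewrite {2}hS exchange_big /= hS -sumrN; apply: eq_bigr => v _.
  rewrite -sumrN; apply: eq_bigr => w _.
  have -> : T :\ w :\ v = T :\ v :\ w by rewrite !finset.setDDl finset.setUC.
  case: (boolP (v \in T)) => vT; case: (boolP (w \in T)) => wT //=; rewrite ?oppr0 //.
  case: (eqVneq w v) => [->|wv] /=; rewrite ?eqxx /= ?oppr0 //.
  case: (r == _); rewrite ?oppr0 //.
  case: (ltngtP v w) => [h|h|h]; last by rewrite (val_inj h) eqxx in wv.
    by rewrite /= expr1 expr0; ring.
  by rewrite /= expr1 expr0; ring.
by move: hS2; lra.
Qed.

End DD.

Lemma boundary_comp (R : realType) n (X : {set {set 'I_n}}) k :
  is_simplicial_complex X -> boundary R X k *m boundary R X k.+1 = 0.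
Proof.
move=> [_ hX]; apply/matrixP => i j; rewrite !mxE.
under eq_bigr do rewrite !mxE /=.
set r := enum_val i; set T := enum_val j.
have : T \in simplices X k.+2 := enum_valP j.
rewrite inE => /andP[TX /eqP cT].
under eq_bigr do rewrite big_distrr /= big_mkcondr /=.
rewrite exchange_big /=.
rewrite (eq_bigr (fun v => (\sum_(w | (w \in T :\ v) && (r == T :\ v :\ w))
     (-1) ^+ (v < w)%N * @sgn R n T w * @sgn R n T v))); first by apply: sum_swap_zero.
move=> v vT.
have hTv : T :\ v \in simplices X k.+1.
  have c1 : #|T :\ v| = k.+1.
    by move: cT; rewrite (cardsD1 v T) vT add1n => -[].
  rewrite inE c1 eqxx andbT; apply: hX TX _ _; first exact: subsetDl.
  by rewrite c1.
rewrite -big_mkcond (big_pred1 (enum_rank_in hTv (T :\ v))); last first.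
  move=> s /=; apply/eqP/eqP => [e|->]; first by apply: enum_val_inj; rewrite enum_rankK_in.
  by rewrite enum_rankK_in.
rewrite enum_rankK_in // big_distrl /=; apply: eq_bigr => w /andP[wTv _].
rewrite -/(@sgn R n (T :\ v) w) -/(@sgn R n T v) sgnD1 //; last by move: wTv; rewrite !inE => /andP[].

Qed.

Section Anal.
Variable R : realType.

Lemma cont_sum (I : Type) (s : seq I) (T : topologicalType) (V : normedModType R)
  (f : I -> T -> V) : (forall i, continuous (f i)) ->
  continuous (fun x => \sum_(i <- s) f i x).
Proof.
move=> hf; elim: s => [|a s IH].
  under eq_fun do rewrite big_nil; exact: cst_continuous.
under eq_fun do rewrite big_cons.
move=> x; exact: (continuousD (hf a x) (IH x)).
Qed.

Lemma mulmx_cont m k (M : 'M[R]_(m, k)) : continuous (fun x : 'cV[R]_k => M *m x).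
Proof.
have -> : (fun x : 'cV[R]_k => M *m x) = fun x => \sum_(j < k) x j 0 *: col j M.
  apply: funext => x; apply/matrixP => i l; rewrite (ord1 l) !mxE summxE.
  by apply: eq_bigr => j _; rewrite !mxE mulrC.
apply: cont_sum => j x; apply: continuousZr_tmp; exact: coord_continuous.
Qed.

Lemma mulmx_diff m k (M : 'M[R]_(m, k)) (x : 'cV[R]_k) : differentiable (mulmx M) x.
Proof. have := @linear_differentiable R _ _ (mulmx M) x (mulmx_cont _ _ M). exact. Qed.

Lemma derive_comp_lin m k (W : normedModType R) (g : 'cV[R]_m -> W) (M : 'M[R]_(m, k)) x v :
  'D_v (fun y => g (M *m y)) x = 'D_(M *m v) g (M *m x).
Proof.
rewrite /derive /=.
suff -> : (fun h : R => h^-1 *: (g (M *m (h *: v + x)) - g (M *m x))) =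
          (fun h : R => h^-1 *: (g (h *: (M *m v) + M *m x) - g (M *m x))) by [].
by apply: funext => h; rewrite mulmxDr scalemxAr.
Qed.

Lemma iter_deriv_comp m k (W : normedModType R) (f : 'cV[R]_m -> W) (M : 'M[R]_(m, k)) vs :
  iter_deriv (fun y => f (M *m y)) vs = (fun y => iter_deriv f (map (mulmx M) vs) (M *m y)).
Proof.
elim: vs => [//|v vs IH] /=; rewrite IH; apply: funext => x; exact: derive_comp_lin.
Qed.

Lemma smooth_comp m k (W : normedModType R) (f : 'cV[R]_m -> W) (M : 'M[R]_(m, k)) :
  smooth f -> smooth (fun y => f (M *m y)).
Proof.
move=> sf vs x; rewrite iter_deriv_comp.
have := differentiable_comp (mulmx_diff _ _ M x) (sf (map (mulmx M) vs) (M *m x)).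
exact.
Qed.

Lemma iter_deriv_add (U W : normedModType R) (f g : U -> W) vs :
  smooth f -> smooth g ->
  iter_deriv (fun x => f x + g x) vs = (fun x => iter_deriv f vs x + iter_deriv g vs x).
Proof.
move=> sf sg; elim: vs => [//|v vs IH] /=; rewrite IH; apply: funext => x.
by apply: deriveD; apply: diff_derivable; [exact: sf | exact: sg].
Qed.

Lemma smooth_add (U W : normedModType R) (f g : U -> W) :
  smooth f -> smooth g -> smooth (fun x => f x + g x).
Proof.
move=> sf sg vs x; rewrite iter_deriv_add //.
exact: (differentiableD (sf vs x) (sg vs x)).
Qed.

Lemma grad_add m (f g : 'cV[R]_m -> R^o) x :
  differentiable f x -> differentiable g x ->
  grad (fun y => f y + g y) x = grad f x + grad g x.
Proof.
move=> df dg; apply/matrixP => i l; rewrite !mxE.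
by apply: deriveD; apply: diff_derivable.
Qed.

Lemma grad_comp m k (phi : 'cV[R]_m -> R^o) (M : 'M[R]_(m, k)) x :
  differentiable phi (M *m x) ->
  grad (fun y => phi (M *m y)) x = M^T *m grad phi (M *m x).
Proof.
move=> dphi; apply/matrixP => i l; rewrite !mxE derive_comp_lin deriveE //.
have -> : M *m (delta_mx i 0 : 'cV[R]_k) = \sum_(j < m) M j i *: (delta_mx j 0 : 'cV[R]_m).
  rewrite -colE; apply/matrixP => a b; rewrite (ord1 b) !mxE summxE.
  under eq_bigr do rewrite !mxE.
  rewrite (bigD1 a) //= big1 => [|c ca]; first by rewrite !eqxx mulr1 addr0.
  by rewrite eq_sym (negbTE ca) mulr0.
rewrite linear_sum; apply: eq_bigr => j _; rewrite linearZ /= !mxE -deriveE //.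
Qed.

End Anal.

Arguments Pm {R m k}. Arguments Wm {R m k}.
Arguments orth_projE {R m k}. Arguments AtP {R m k}. Arguments Pm_sym {R m k}.
Arguments PA {R m k}. Arguments AtAW {R m k}.
Arguments smooth_comp {R m k W f}. Arguments smooth_add {R U W f g}.
Arguments grad_add {R m f g}. Arguments grad_comp {R m k phi}.

Lemma PmE (R : realType) m k (A : 'M[R]_(m, k)) : Pm A = A *m Wm A.
Proof. by []. Qed.


Lemma ApmT (R : realType) m k (A : 'M[R]_(m, k)) : A *m Pm A^T = A.
Proof. by have := AtP A^T; rewrite trmxK. Qed.

Theorem mainTheorem6 (R : realType) (n : nat) (X : {set {set 'I_n}}) (d : nat)
  (Fup : chain R X d.+2 -> chain R X d.+2)
  (Fdown : chain R X d -> chain R X d) :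
  is_simplicial_complex X ->
  smooth Fup -> smooth Fdown ->
  exact_field (fun theta : chain R X d.+1 =>
      (boundary R X d)^T *m Fdown (boundary R X d *m theta)
      + boundary R X d.+1 *m Fup ((boundary R X d.+1)^T *m theta))
  <->
  (exact_field (fun x : chain R X d.+2 =>
       orth_proj (boundary R X d.+1)^T (Fup (orth_proj (boundary R X d.+1)^T x)))
   /\
   exact_field (fun y : chain R X d =>
       orth_proj (boundary R X d) (Fdown (orth_proj (boundary R X d) y)))).
Proof.
move=> hX _ _.
set B1 := boundary R X d.+1; set B0 := boundary R X d.
have BB : B0 *m B1 = 0 by apply: boundary_comp.
have BBt : B1^T *m B0^T = 0 by rewrite -trmx_mul BB trmx0.
split.
- move=> [phi [sphi hG]]; split.
  + pose M := Pm B1 *m Wm B1^T.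
    have hM0 : B0 *m M = 0 by rewrite /M PmE !mulmxA BB !mul0mx.
    have hM1 : B1^T *m M = Pm B1^T by rewrite /M mulmxA AtP -PmE.
    clearbody M.
    exists (fun x => phi (M *m x)); split; first exact: smooth_comp.
    move=> x; rewrite grad_comp; last exact: (sphi [::]).
    rewrite -hG mulmxDr !mulmxA -!trmx_mul hM0 hM1.
    by rewrite trmx0 !mul0mx add0r -[B1 in M^T *m B1]trmxK -trmx_mul hM1 Pm_sym !orth_projE.
  + pose Nm := Pm B0^T *m Wm B0.
    have hN0 : B1^T *m Nm = 0 by rewrite /Nm PmE !mulmxA BBt !mul0mx.
    have hN1 : B0 *m Nm = Pm B0 by rewrite /Nm mulmxA ApmT -PmE.
    clearbody Nm.
    exists (fun y => phi (Nm *m y)); split; first exact: smooth_comp.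
    move=> y; rewrite grad_comp; last exact: (sphi [::]).
    rewrite -hG mulmxDr !mulmxA -!trmx_mul hN0 hN1.
    by rewrite -[B1 in Nm^T *m B1]trmxK -trmx_mul hN0 trmx0 !mul0mx addr0 Pm_sym !orth_projE.
- move=> [[psi [spsi hP]] [chi [schi hQ]]].
  exists (fun th => psi (B1^T *m th) + chi (B0 *m th)); split.
    by apply: smooth_add; apply: smooth_comp.
  move=> th; rewrite grad_add; last first.
    - exact: (smooth_comp B0 schi [::]).
    - exact: (smooth_comp B1^T spsi [::]).
  rewrite !grad_comp; [|exact: (schi [::])|exact: (spsi [::])].
  rewrite -hP -hQ !orth_projE trmxK addrC.
  have e1 : B1 *m Pm B1^T = B1.
    by have := congr1 trmx (PA B1^T); rewrite trmx_mul Pm_sym trmxK.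
  have e0 : B0^T *m Pm B0 = B0^T by rewrite AtP.
  have e1' v : B1 *m (Pm B1^T *m v) = B1 *m v by rewrite mulmxA e1.
  have e0' v : B0^T *m (Pm B0 *m v) = B0^T *m v by rewrite mulmxA e0.
  have p1 v : Pm B1^T *m (B1^T *m v) = B1^T *m v by rewrite mulmxA PA.
  have p0 v : Pm B0 *m (B0 *m v) = B0 *m v by rewrite mulmxA PA.
  by rewrite p1 p0 e1' e0'.
Qed.
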